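(* Let $F$ be a commutative field. Then $\mathrm{PG}(4,F)$ admits no linear line partition.
   Context: A line spread of a projective space is a set of lines such that each point lies on exactly one of them. A line partition $\Omega$ of $\mathrm{PG}(n,F)$ is a partition of its set of lines into line spreads of hyperplanes such that each hyperplane contains exactly one of these spreads; $\pi_\Omega$ maps each line to the hyperplane containing its class. $\Omega$ is linear if $\pi_\Omega$ is a linear mapping from the Grassmannian of lines (points = lines of $\mathrm{PG}(n,F)$, G-lines = pencils of lines through a point in a plane) to the dual space $\mathrm{PG}(n,F)^*$; since $\pi_\Omega$ is everywhere defined, this means that every pencil of lines is mapped bijectively onto a pencil of hyperplanes through some $(n-2)$-subspace. *)

(* Defs.v *)
From HB Require Import structures.
From mathcomp Require Import all_boot all_algebra.
Set Implicit Arguments. Unset Strict Implicit. Unset Printing Implicit Defensive.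
Import GRing.Theory.
Local Open Scope ring_scope.

(* PG(n,F) is modelled by the vector space F^(n+1) = 'rV[F]_(n.+1):
   projective points   = vector subspaces of dimension 1,
   projective lines    = vector subspaces of dimension 2,
   projective planes   = vector subspaces of dimension 3,
   (n-2)-subspaces     = vector subspaces of dimension n-1,
   hyperplanes         = vector subspaces of dimension n. *)

Section PG.
Variables (F : fieldType) (n : nat).
Notation sub := {vspace 'rV[F]_(n.+1)}.

Definition is_line_spread_of (H : sub) (S : sub -> Prop) : Prop :=
  (forall L, S L -> \dim L = 2%N /\ (L <= H)%VS) /\
  (forall p : sub, \dim p = 1%N -> (p <= H)%VS ->
     exists! L : sub, S L /\ (p <= L)%VS).

(* A line partition Omega is encoded by its map pi_Omega (line |-> hyperplane
   containing its class): each line is sent to a hyperplane, and for every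
   hyperplane H the class pi^-1(H) is a line spread of H. *)
Definition line_partition (pi : sub -> sub) : Prop :=
  (forall L : sub, \dim L = 2%N -> \dim (pi L) = n) /\
  (forall H : sub, \dim H = n ->
     is_line_spread_of H (fun L => \dim L = 2%N /\ pi L = H)).

Definition in_pencil (p P L : sub) : Prop :=
  \dim L = 2%N /\ (p <= L)%VS /\ (L <= P)%VS.

Definition linear_lp (pi : sub -> sub) : Prop :=
  forall p P : sub, \dim p = 1%N -> \dim P = 3%N -> (p <= P)%VS ->
  exists S : sub, \dim S = n.-1 /\
    (forall L, in_pencil p P L -> (S <= pi L)%VS) /\
    (forall L1 L2, in_pencil p P L1 -> in_pencil p P L2 ->
        pi L1 = pi L2 -> L1 = L2) /\
    (forall H : sub, \dim H = n -> (S <= H)%VS ->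
        exists L, in_pencil p P L /\ pi L = H).

End PG.

(* Main.v *)
Require Import Defs.
From HB Require Import structures.
From mathcomp Require Import all_boot all_algebra.
From Stdlib Require Import Classical.
From mathcomp Require Import zify.
Import GRing.Theory.
Set Implicit Arguments. Unset Strict Implicit. Unset Printing Implicit Defensive.

Section H.
Variables (K : fieldType) (vT : vectType K).
Implicit Types U V W : {vspace vT}.

Lemma eq_dimv U V : (U <= V)%VS -> \dim V <= \dim U -> U = V.
Proof. by move=> sUV dVU; apply/eqP; rewrite eqEdim sUV. Qed.

Lemma dim_add_line U (w : vT) : w \notin U -> \dim (U + <[w]>)%VS = (\dim U).+1.
Proof.
move=> wU.
have w0 : w != 0%R by apply: contraNneq wU => ->; apply: mem0v.
have := dimv_sum_cap U <[w]>%VS; rewrite dim_vline w0.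
have -> : \dim (U :&: <[w]>)%VS = 0%N.
  have := dimvS (capvSr U <[w]>%VS); rewrite dim_vline w0.
  case E: (\dim _) => [|[|m]] // _.
  have E' : (U :&: <[w]>)%VS = <[w]>%VS.
    by apply: eq_dimv; rewrite ?capvSr // dim_vline w0 E.
  by move: wU; rewrite memvE -E' capvSl.
by rewrite addn0 addn1.
Qed.

Lemma extend U W : (U <= W)%VS -> \dim U < \dim W -> exists w, w \in W /\ w \notin U.
Proof.
move=> sUW dUW; apply NNPP; intro H.
have : (W <= U)%VS.
  apply/subvP => w wW; apply: negbNE; apply/negP => wU; by apply: H; exists w.
by move/dimvS; rewrite leqNgt dUW.
Qed.

Lemma grow k U W : (U <= W)%VS -> \dim U <= k -> k <= \dim W ->
  exists V, [/\ (U <= V)%VS, (V <= W)%VS & \dim V = k].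
Proof.
move=> sUW; elim: k => [|k IH].
  by rewrite leqn0 => /eqP d0 _; exists U.
rewrite leq_eqVlt => /orP[/eqP dU _|]; first by exists U.
rewrite ltnS => dUk kW; case: (IH dUk (ltnW kW)) => V [sUV sVW dV].
case: (extend sVW); first by rewrite dV.
move=> w [wW wV]; exists (V + <[w]>)%VS; split.
- exact: subv_trans sUV (addvSl _ _).
- by rewrite subv_add sVW -memvE.
- by rewrite dim_add_line // dV.
Qed.

Lemma avoid2 U V W : (U <= W)%VS -> (V <= W)%VS -> \dim U < \dim W -> \dim V < \dim W ->
  exists w, [/\ w \in W, w \notin U & w \notin V].
Proof.
move=> sUW sVW dU dV.
case: (extend sUW dU) => a [aW aU].
case aV: (a \in V); last by exists a; rewrite aV.
case: (extend sVW dV) => b [bW bV].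
case bU: (b \in U); last by exists b; rewrite bU.
exists (a + b)%R; split.
- exact: memvD.
- apply: contra aU => abU; have -> : a = ((a + b) - b)%R by rewrite addrK.
  exact: memvB.
- apply: contra bV => abV; have -> : b = ((a + b) - a)%R by rewrite [(a + b)%R]addrC addrK.
  exact: memvB.
Qed.
End H.

Lemma ar1 a b : a + b = 3 + 3 -> a <= 4 -> b <= 3 -> b <> 3 -> b = 2.
Proof. lia. Qed.
Lemma ar2 a : a + 2 = 3 + 3 -> a = 4.
Proof. lia. Qed.
Lemma ar3 a b : a + b = 3 + 2 -> b <= 1 -> 4 <= a.
Proof. lia. Qed.
Lemma ar4 a b : a + b = 2 + 2 -> a <= 3 -> 1 <= b.
Proof. lia. Qed.

Section Main.
Variables (F : fieldType) (pi : {vspace 'rV[F]_5} -> {vspace 'rV[F]_5}).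
Hypotheses (hLP : line_partition pi) (hLin : linear_lp pi).

Lemma dim_pi L : \dim L = 2 -> \dim (pi L) = 4.
Proof. exact: hLP.1. Qed.

Lemma subpi L : \dim L = 2 -> (L <= pi L)%VS.
Proof.
move=> dL; case: hLP => h1 h2.
by have [[]] := (h2 (pi L) (h1 L dL)).1 L (conj dL erefl).
Qed.

Lemma lemA p P M : \dim p = 1 -> \dim P = 3 -> (p <= P)%VS ->
  in_pencil p P M -> (P <= pi M)%VS ->
  (forall N, in_pencil p P N -> (P <= pi N)%VS) /\
  (forall H, \dim H = 4 -> (P <= H)%VS -> exists N, in_pencil p P N /\ pi N = H).
Proof.
move=> dp dP pP [dM [pM MP]] PpiM.
case: (hLin dp dP pP) => S [dS [Spi [inj surj]]].
simpl in dS.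
suff E : S = P by subst S; split.
have hSP : (S + P <= pi M)%VS by rewrite subv_add Spi.
have dsum := dimv_sum_cap S P.
have dle : \dim (S + P) <= 4 by rewrite -[X in _ <= X](dim_pi dM); apply: dimvS.
have dcap : \dim (S :&: P) <= 3 by rewrite -[X in _ <= X]dP; apply: dimvS; apply: capvSr.
case: (eqVneq (\dim (S :&: P)) 3) => [e3|n3].
  have e : (S :&: P)%VS = S by apply: eq_dimv; rewrite ?capvSl // e3 dS.
  by apply: eq_dimv; [rewrite -e capvSr | rewrite dS dP].
exfalso.
have dK : \dim (S :&: P) = 2.
  rewrite dS dP in dsum; move/eqP: n3 => n3.
  exact: ar1 dsum dle dcap n3.
set K := (S :&: P)%VS in dK.
have KP : (K <= P)%VS by apply: capvSr.
have dSP : \dim (S + P) = 4.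
  rewrite dK dS dP in dsum.
  exact: ar2 dsum.
have key : forall N w, in_pencil p P N -> w \in N -> w \notin K -> pi N = (S + P)%VS.
  move=> N w [dN [pN NP]] wN wK.
  have NS : ~~ (N <= S)%VS.
    apply/negP => NS; move/negP: wK; apply; rewrite memv_cap.
    by rewrite (subvP NS _ wN) (subvP NP _ wN).
  have dSN : \dim (S :&: N) <= 1.
    have : \dim (S :&: N) <= 2 by rewrite -[X in _ <= X]dN; apply: dimvS; apply: capvSr.
    rewrite leq_eqVlt => /orP[/eqP e|] //.
    have e' : (S :&: N)%VS = N by apply: eq_dimv; rewrite ?capvSr // e dN.
    by move: NS; rewrite -e' capvSl.
  have ds := dimv_sum_cap S N; rewrite dS dN in ds.
  have d4 : 4 <= \dim (S + N).
    exact: ar3 ds dSN.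
  have e1 : (S + N)%VS = pi N.
    by apply: eq_dimv; [rewrite subv_add Spi // subpi // | rewrite dim_pi].
  have e2 : (S + N)%VS = (S + P)%VS.
    apply: eq_dimv; last by rewrite dSP.
    by rewrite subv_add addvSl (subv_trans NP) // addvSr.
  by rewrite -e1 e2.
have dp3 : \dim p < \dim P by rewrite dp dP.
have dK3 : \dim K < \dim P by rewrite dK dP.
case: (avoid2 KP pP dK3 dp3) => y [yP yK yp].
set N1 := (p + <[y]>)%VS.
have dN1 : \dim N1 = 2 by rewrite /N1 dim_add_line // dp.
have N1P : (N1 <= P)%VS by rewrite subv_add pP -memvE.
have pen1 : in_pencil p P N1 by split => //; split => //; apply: addvSl.
have dN13 : \dim N1 < \dim P by rewrite dN1 dP.
case: (avoid2 N1P KP dN13 dK3) => z [zP zN1 zK].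
have zp : z \notin p by apply: contra zN1; apply: (subvP (addvSl _ _)).
set N2 := (p + <[z]>)%VS.
have dN2 : \dim N2 = 2 by rewrite /N2 dim_add_line // dp.
have N2P : (N2 <= P)%VS by rewrite subv_add pP -memvE.
have pen2 : in_pencil p P N2 by split => //; split => //; apply: addvSl.
have y1 : y \in N1 by rewrite memvE addvSr.
have z2 : z \in N2 by rewrite memvE addvSr.
have e12 : N1 = N2 by apply: inj => //; rewrite (key _ _ pen1 y1 yK) (key _ _ pen2 z2 zK).
by move: zN1; rewrite e12 z2.
Qed.

End Main.
Unset Implicit Arguments.

Theorem proposition7p3 (F : fieldType) :
  ~ (exists pi : {vspace 'rV[F]_5} -> {vspace 'rV[F]_5},
       line_partition pi /\ linear_lp pi).
Proof.
move=> [pi [hLP hLin]].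
have dfull : \dim (fullv : {vspace 'rV[F]_5}) = 5 by rewrite dimvf dim_matrix.
case: (grow (k := 2) (sub0v (fullv : {vspace 'rV[F]_5}))); [by rewrite dimv0 | by rewrite dfull | ].
move=> L0 [_ _ dL0].
set H := pi L0.
have dH : \dim H = 4 by apply: dim_pi.
case: (grow (k := 1) (sub0v H)); [by rewrite dimv0 | by rewrite dH | ].
move=> r0 [_ r0H dr0].
have [_ hU] := hLP.2 H dH.
case: (hU r0 dr0 r0H) => L [[[dL piL] r0L] uniq].
have LH : (L <= H)%VS by rewrite -piL; apply: subpi.
case: (grow (k := 3) LH); [by rewrite dL | by rewrite dH | ].
move=> P [LP PH dP].
case: (grow (k := 1) (sub0v L)); [by rewrite dimv0 | by rewrite dL | ].
move=> q [_ qL dq].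
case: (extend LP); first by rewrite dL dP.
move=> w [wP wL].
have w0 : w != 0%R by apply: contraNneq wL => ->; apply: mem0v.
set p := <[w]>%VS.
have dp : \dim p = 1 by rewrite /p dim_vline w0.
have pP : (p <= P)%VS by rewrite -memvE.
have qP : (q <= P)%VS by apply: subv_trans LP.
have [allq _] := lemA hLP hLin dq dP qP (conj dL (conj qL LP)) (eq_ind_r (fun X => (P <= X)%VS) PH piL).
have wq : w \notin q by apply: contra wL; apply: (subvP qL).
set M := (q + <[w]>)%VS.
have dM : \dim M = 2 by rewrite /M dim_add_line // dq.
have MP : (M <= P)%VS by rewrite subv_add qP -memvE.
have PM := allq M (conj dM (conj (addvSl _ _) MP)).
have [_ surjp] := lemA hLP hLin dp dP pP (conj dM (conj (addvSr _ _) MP)) PM.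
case: (surjp H dH PH) => N [[dN [pN NP]] piN].
have dNL : 1 <= \dim (N :&: L).
  have ds := dimv_sum_cap N L; rewrite dN dL in ds.
  have : \dim (N + L) <= 3 by rewrite -[X in _ <= X]dP; apply: dimvS; rewrite subv_add NP LP.
  by move=> h; exact: ar4 ds h.
case: (grow (k := 1) (sub0v (N :&: L)%VS)); [by rewrite dimv0 | exact: dNL | ].
move=> r [_ rNL dr].
have rN : (r <= N)%VS by apply: subv_trans rNL (capvSl _ _).
have rL : (r <= L)%VS by apply: subv_trans rNL (capvSr _ _).
case: (hU r dr (subv_trans rL LH)) => L' [_ u].
have e1 := u L (conj (conj dL piL) rL).
have e2 := u N (conj (conj dN piN) rN).
move: wL; rewrite -e1 e2 memvE.
by rewrite pN.
Qed.
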